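(* Let $E,A\in\mathbb{R}^{n\times n}$ with $A$ nonsingular and $\mathrm{rank}\,E=r\ge1$, and let $(X,Y)$ be a full rank decomposition of $E$ with $X,Y\in\mathbb{R}^{n\times r}$. (i) If $(E,A)$ has index one, then $Y^T\mathcal{C}(E,A)=\mathbb{R}^r$. (ii) If $(E,A)$ has index two, then $Y^T\mathcal{C}(E,A)=\mathrm{Im}\big((Y^TA^{-1}X)^2\big)$ and this subspace has dimension strictly less than $r$.
   Context: For $E,A\in\mathbb{R}^{n\times n}$ with $A$ nonsingular, $(E,A)$ denotes the descriptor system $E\dot x=Ax$. Its index is the smallest integer $k^*\ge0$ with $\mathrm{Im}((A^{-1}E)^{k^*+1})=\mathrm{Im}((A^{-1}E)^{k^*})$, and its consistency space is $\mathcal{C}(E,A)=\mathrm{Im}((A^{-1}E)^{k^*})$. A full rank decomposition of $E$ is a pair $(X,Y)$ of matrices with full column rank such that $E=XY^T$. *)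

(* Defs.v *)
From HB Require Import structures.
From mathcomp Require Import all_boot all_order all_algebra.
Set Implicit Arguments. Unset Strict Implicit. Unset Printing Implicit Defensive.
Import GRing.Theory Num.Theory.
Local Open Scope ring_scope.

(* Column space Im(M) of M : 'M_(m,k), represented (mxalgebra convention:
   row spaces) as the row space of M^T, a subspace of 'rV_m. *)
Definition colspace (R : fieldType) (m k : nat) (M : 'M[R]_(m, k)) : 'M[R]_(k, m) :=
  M^T.

Definition AinvE (R : fieldType) (n : nat) (E A : 'M[R]_n) : 'M[R]_n :=
  invmx A *m E.

Definition im_stable (R : fieldType) (n : nat) (E A : 'M[R]_n) (k : nat) : bool :=
  (colspace (AinvE E A ^+ k.+1) == colspace (AinvE E A ^+ k))%MS.

Definition has_index (R : fieldType) (n : nat) (E A : 'M[R]_n) (k : nat) : Prop :=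
  im_stable E A k /\ forall j, (j < k)%N -> ~~ im_stable E A j.

Definition full_rank_decomp (R : fieldType) (n r : nat)
    (E : 'M[R]_n) (X Y : 'M[R]_(n, r)) : Prop :=
  E = X *m Y^T /\ \rank X = r /\ \rank Y = r.

(* Main.v *)
Require Import Defs.
From HB Require Import structures.
From mathcomp Require Import all_boot all_order all_algebra.
Import GRing.Theory Num.Theory.
Local Open Scope ring_scope.

Theorem mainTheorem10 (R : realFieldType) (n r : nat) (E A : 'M[R]_n)
    (X Y : 'M[R]_(n, r)) :
  A \in unitmx -> \rank E = r -> (1 <= r)%N -> full_rank_decomp E X Y ->
  (has_index E A 1 ->
     (colspace (Y^T *m AinvE E A ^+ 1) == 1%:M)%MS) /\
  (has_index E A 2 ->
     (colspace (Y^T *m AinvE E A ^+ 2)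
        == colspace ((Y^T *m invmx A *m X) ^+ 2))%MS /\
     (\rank (colspace ((Y^T *m invmx A *m X) ^+ 2)) < r)%N).
Proof.
move=> Au rE r1 [EXY [rX rY]].
set N := AinvE E A.
set M := Y^T *m invmx A *m X.
have YN : Y^T *m N = M *m Y^T.
  by rewrite /N /AinvE EXY /M !mulmxA.
have YNk : forall k, Y^T *m N ^+ k = M ^+ k *m Y^T.
  elim=> [|k IH]; first by rewrite !expr0 mulmx1 mul1mx.
  by rewrite exprSr -mulmxE mulmxA IH -mulmxA YN mulmxA mulmxE -exprSr.
have NSk : forall k, N ^+ k.+1 = (invmx A *m X) *m (M ^+ k *m Y^T).
  move=> k; rewrite exprS -mulmxE -YNk !mulmxA.
  by rewrite /N /AinvE EXY !mulmxA.
have YTfree : row_free Y^T by rewrite /row_free mxrank_tr rY.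
have Yfull : row_full Y by rewrite /row_full rY.
have rP : \rank (invmx A *m X) = r.
  by rewrite -mxrank_tr trmx_mul mxrankMfree ?mxrank_tr // row_free_unit unitmx_tr unitmx_inv.
have rNk : forall k, \rank (N ^+ k.+1) = \rank (M ^+ k).
  move=> k; rewrite NSk mulmxA mxrankMfree // -mxrank_tr trmx_mul mxrankMfree ?mxrank_tr //.
  by rewrite /row_free mxrank_tr rP.
have colY : forall k, (colspace (Y^T *m N ^+ k) :=: (M ^+ k)^T)%MS.
  by move=> k; rewrite /colspace YNk trmx_mul trmxK; apply: eqmxMfull.
split.
  move=> [st _].
  have rM : \rank M = r.
    move: st; rewrite /im_stable /colspace -/N => /eqmx_rank.
    by rewrite !mxrank_tr rNk (rNk 0%N) expr1 expr0 mxrank1.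
  apply/eqmxP; apply: eqmx_trans (colY 1%N) _; rewrite expr1.
  apply/eqmxP; apply/andP; split; first exact: submx1.
  by rewrite sub1mx /row_full mxrank_tr rM.
move=> [_ ns].
have ns1 := ns 1%N isT.
have sub : (colspace (N ^+ 2) <= colspace (N ^+ 1))%MS.
  by rewrite /colspace exprSr -mulmxE trmx_mul submxMl.
have lt : (\rank (colspace (N ^+ 2)) < \rank (colspace (N ^+ 1)))%N.
  have := mxrank_leqif_eq sub; move/leqifP.
  by move: ns1; rewrite /im_stable -/N => /negbTE ->.
move: lt; rewrite /colspace !mxrank_tr rNk (rNk 0%N) expr0 mxrank1 expr1 => ltM.
split.
  by apply/eqmxP; apply: eqmx_trans (colY 2%N) _.

rewrite expr2 -mulmxE.
exact: leq_ltn_trans (mxrankM_maxr _ _) ltM.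
Qed.
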